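(* Let $\mu>0$, let $X$ have the skew-symmetric-Laplace-uniform density with parameter $\mu$ (defined in the context), with cdf $G$, and let $M$ be a median, i.e. $G(M)=\tfrac12$. Put $G(0)=\tfrac12+\frac{e^{-\mu}-1}{2\mu}$ and $G(\mu)=1-e^{-\mu}$. Then: (i) if $G(0)>\tfrac12$, $M$ is a solution of $e^{M}(M-1+\mu)+e^{-\mu}-\mu=0$; (ii) if $G(0)\le\tfrac12<G(\mu)$, $M$ is a solution of $e^{-M}(-M-1-\mu)+e^{-\mu}+\mu=0$; (iii) if $G(\mu)\le\tfrac12$, then $M=\ln 2$.
   Context: For $\mu\in\mathbb{R}\setminus\{0\}$, the skew-symmetric-Laplace-uniform distribution $SSLUD(\mu)$ is the distribution on $\mathbb{R}$ with density $$g(x)=\begin{cases} 0 & \text{if } x/\mu<-1,\\ e^{-|x|}\left(\dfrac{x}{2\mu}+\dfrac12\right) & \text{if } -1\le x/\mu<1,\\ e^{-|x|} & \text{if } x/\mu\ge 1.\end{cases}$$ *)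

(* Defs.v *)
From Stdlib Require Import Reals.
From Coquelicot Require Import Coquelicot.
Open Scope R_scope.

Definition SSLUD_density (mu x : R) : R :=
  if Rlt_dec (x / mu) (-1) then 0
  else if Rlt_dec (x / mu) 1 then exp (- Rabs x) * (x / (2 * mu) + 1 / 2)
  else exp (- Rabs x).

Definition SSLUD_cdf (mu x : R) : R :=
  RInt_gen (SSLUD_density mu) (Rbar_locally m_infty) (at_point x).

(* Main.v *)
Require Import Defs.
From Stdlib Require Import Reals Lra Psatz.
From Coquelicot Require Import Coquelicot.
Open Scope R_scope.

Section S.
Variable mu : R.
Hypothesis hmu : 0 < mu.

Let f := SSLUD_density mu.

Definition A1 t := exp t * ((t - 1 + mu) / (2 * mu)).
Definition A2 t := - exp (- t) * ((t + 1 + mu) / (2 * mu)).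
Definition A3 t := - exp (- t).
Definition d1 t := exp t * (t / (2 * mu) + 1 / 2).
Definition d2 t := exp (- t) * (t / (2 * mu) + 1 / 2).
Definition d3 t := exp (- t).

Lemma divmu x : x / mu * mu = x.
Proof. field; lra. Qed.

Lemma L0 x : x < -mu -> f x = 0.
Proof.
  intro h. unfold f, SSLUD_density.
  destruct (Rlt_dec (x/mu) (-1)) as [|n]; auto.
  exfalso. apply n. pose proof (divmu x). nra.
Qed.

Lemma L1 x : -mu < x < 0 -> f x = d1 x.
Proof.
  intro h. unfold f, SSLUD_density, d1. pose proof (divmu x).
  destruct (Rlt_dec (x/mu) (-1)). { exfalso; nra. }
  destruct (Rlt_dec (x/mu) 1). 2: { exfalso; nra. }
  rewrite Rabs_left by lra. rewrite Ropp_involutive. f_equal; try (field; lra).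
Qed.

Lemma L2 x : 0 < x < mu -> f x = d2 x.
Proof.
  intro h. unfold f, SSLUD_density, d2. pose proof (divmu x).
  destruct (Rlt_dec (x/mu) (-1)). { exfalso; nra. }
  destruct (Rlt_dec (x/mu) 1). 2: { exfalso; nra. }
  rewrite Rabs_right by lra. f_equal; try (field; lra).
Qed.

Lemma L3 x : mu < x -> f x = d3 x.
Proof.
  intro h. unfold f, SSLUD_density, d3. pose proof (divmu x).
  destruct (Rlt_dec (x/mu) (-1)). { exfalso; nra. }
  destruct (Rlt_dec (x/mu) 1). { exfalso; nra. }
  rewrite Rabs_right by lra. reflexivity.
Qed.

Lemma I1 x : -mu <= x <= 0 -> is_RInt f (-mu) x (A1 x - A1 (-mu)).
Proof.
  intro h. apply is_RInt_ext with d1.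
  { intros y hy. rewrite Rmin_left in hy by lra. rewrite Rmax_right in hy by lra.
    symmetry; apply L1; lra. }
  apply (is_RInt_derive A1 d1).
  - intros y _. unfold A1, d1. auto_derive; auto. field. lra.
  - intros y _. apply (@ex_derive_continuous R_AbsRing R_NormedModule). unfold d1. auto_derive. auto.
Qed.

Lemma I2 x : 0 <= x <= mu -> is_RInt f 0 x (A2 x - A2 0).
Proof.
  intro h. apply is_RInt_ext with d2.
  { intros y hy. rewrite Rmin_left in hy by lra. rewrite Rmax_right in hy by lra.
    symmetry; apply L2; lra. }
  apply (is_RInt_derive A2 d2).
  - intros y _. unfold A2, d2. auto_derive; auto. field. lra.
  - intros y _. apply (@ex_derive_continuous R_AbsRing R_NormedModule). unfold d2. auto_derive. auto.
Qed.

Lemma I3 x : mu <= x -> is_RInt f mu x (A3 x - A3 mu).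
Proof.
  intro h. apply is_RInt_ext with d3.
  { intros y hy. rewrite Rmin_left in hy by lra. rewrite Rmax_right in hy by lra.
    symmetry; apply L3; lra. }
  apply (is_RInt_derive A3 d3).
  - intros y _. unfold A3, d3. auto_derive; auto. ring.
  - intros y _. apply (@ex_derive_continuous R_AbsRing R_NormedModule). unfold d3. auto_derive. auto.
Qed.

Lemma Z c : c <= -mu -> is_RInt_gen f (Rbar_locally m_infty) (at_point c) 0.
Proof.
  intro hc.
  apply is_RInt_gen_ext with (Derive (fun _ => 0)).
  { apply Filter_prod with (fun a => a < -mu) (fun b => b = c).
    - exists (-mu). auto.
    - reflexivity.
    - intros a b ha hb y hy. simpl in hy. subst b.
      rewrite Derive_const. symmetry. apply L0.
      destruct hy as [_ hy]. revert hy. unfold Rmax. destruct (Rle_dec a c); lra. }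
  match goal with |- is_RInt_gen ?g ?F ?G _ => assert (H : is_RInt_gen g F G (0 - 0)) end.
  2: { rewrite Rminus_0_r in H. exact H. }
  apply is_RInt_gen_Derive.
  - apply Filter_prod with (fun _ => True) (fun _ => True).
    + exists 0; auto.
    + exact I.
    + intros. apply ex_derive_const.
  - apply Filter_prod with (fun _ => True) (fun _ => True).
    + exists 0; auto.
    + exact I.
    + intros. apply continuous_ext with (fun _ => 0).
    + intro z. rewrite Derive_const. reflexivity.
    + apply continuous_const.
  - apply filterlim_const.
  - apply filterlim_const.
Qed.

Lemma gen x l : -mu <= x -> is_RInt f (-mu) x l -> SSLUD_cdf mu x = l.
Proof.
  intros hx hI. unfold SSLUD_cdf. apply is_RInt_gen_unique.
  replace l with (plus 0 l) by (unfold plus; simpl; ring).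
  apply (@is_RInt_gen_Chasles R_NormedModule) with (-mu); try exact _.
  - apply Z; lra.
  - apply is_RInt_gen_at_point. exact hI.
Qed.

Lemma G0 x : x <= -mu -> SSLUD_cdf mu x = 0.
Proof.
  intro hx. unfold SSLUD_cdf. apply is_RInt_gen_unique. apply Z; auto.
Qed.

Lemma G1 x : -mu <= x <= 0 -> SSLUD_cdf mu x = A1 x - A1 (-mu).
Proof. intro h. apply gen; [lra| apply I1; lra]. Qed.

Lemma G2 x : 0 <= x <= mu -> SSLUD_cdf mu x = (A1 0 - A1 (-mu)) + (A2 x - A2 0).
Proof.
  intro h. apply gen; [lra|].
  apply (is_RInt_Chasles f (-mu) 0 x); [apply I1; lra | apply I2; lra].
Qed.

Lemma G3 x : mu <= x ->
  SSLUD_cdf mu x = ((A1 0 - A1 (-mu)) + (A2 mu - A2 0)) + (A3 x - A3 mu).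
Proof.
  intro h. apply gen; [lra|].
  apply (is_RInt_Chasles f (-mu) mu x); [|apply I3; lra].
  apply (is_RInt_Chasles f (-mu) 0 mu); [apply I1; lra | apply I2; lra].
Qed.

End S.

Lemma ineq_a mu x : 0 < mu -> -mu <= x <= 0 -> exp x * (x - 1 + mu) <= mu - 1.
Proof.
  intros hmu hx. pose proof (exp_ineq1_le x) as h1.
  assert (ht : exp x <= 1). { rewrite <- exp_0. destruct (Req_dec x 0). subst; lra. left; apply exp_increasing; lra. }
  pose proof (exp_pos x).
  nra.
Qed.

Lemma ineq_b mu x : 0 < mu -> 0 <= x < mu ->
  exp (- mu) * (2 * mu + 1) < exp (- x) * (x + 1 + mu).
Proof.
  intros hmu hx.
  replace (- x) with (- mu + (mu - x)) by ring. rewrite exp_plus.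
  pose proof (exp_ineq1 (mu - x) ltac:(lra)). pose proof (exp_pos (-mu)).
  assert (exp (mu - x) * (x + 1 + mu) > 2 * mu + 1) by nra.
  nra.
Qed.

Theorem mainTheorem5 (mu M : R) (hmu : 0 < mu)
  (hM : SSLUD_cdf mu M = 1 / 2) :
  (SSLUD_cdf mu 0 > 1 / 2 ->
     exp M * (M - 1 + mu) + exp (- mu) - mu = 0) /\
  (SSLUD_cdf mu 0 <= 1 / 2 < SSLUD_cdf mu mu ->
     exp (- M) * (- M - 1 - mu) + exp (- mu) + mu = 0) /\
  (SSLUD_cdf mu mu <= 1 / 2 -> M = ln 2).
Proof.
  assert (he : exp (- mu) < 1). { rewrite <- exp_0. apply exp_increasing; lra. }
  pose proof (exp_pos (- mu)) as hep.
  assert (hG0 : SSLUD_cdf mu 0 = (mu - 1 + exp (- mu)) / (2 * mu)).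
  { rewrite (G1 mu hmu 0) by lra. unfold A1. rewrite exp_0. field. lra. }
  assert (hGmu : SSLUD_cdf mu mu = 1 - exp (- mu)).
  { rewrite (G2 mu hmu mu) by lra. unfold A1, A2. rewrite Ropp_0, exp_0.
    replace (- - mu) with mu by ring. field. lra. }
  assert (hG0lt : SSLUD_cdf mu 0 < 1 / 2).
  { rewrite hG0. apply (Rmult_lt_reg_r (2 * mu)); [lra|].
    unfold Rdiv. rewrite Rmult_assoc, Rinv_l by lra. lra. }
  assert (hMpos : 0 < M).
  { destruct (Rle_lt_dec M (- mu)) as [h|h].
    { rewrite (G0 mu hmu M h) in hM. lra. }
    destruct (Rle_lt_dec M 0) as [h'|h']; auto.
    exfalso. rewrite (G1 mu hmu M) in hM by lra.
    pose proof (ineq_a mu M hmu ltac:(lra)).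
    assert (A1 mu M - A1 mu (- mu) <= SSLUD_cdf mu 0).
    { rewrite hG0. unfold A1. apply (Rmult_le_reg_r (2 * mu)); [lra|].
      replace ((exp M * ((M - 1 + mu) / (2 * mu)) - exp (- mu) * ((- mu - 1 + mu) / (2 * mu))) * (2 * mu))
        with (exp M * (M - 1 + mu) + exp (- mu)) by (field; lra).
      replace ((mu - 1 + exp (- mu)) / (2 * mu) * (2 * mu)) with (mu - 1 + exp (- mu)) by (field; lra).
      lra. }
    lra. }
  assert (hbig : mu <= M -> SSLUD_cdf mu M = 1 - exp (- M)).
  { intro h. rewrite (G3 mu hmu M h). rewrite (G2 mu hmu mu) in hGmu by lra.
    rewrite hGmu. unfold A3. replace (- - mu) with mu by ring. ring. }
  split; [|split].
  - intro h. lra.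
  - intros [h1 h2]. destruct (Rle_lt_dec M mu) as [h|h].
    + rewrite (G2 mu hmu M) in hM by lra. unfold A1, A2 in hM.
      rewrite Ropp_0, exp_0 in hM. replace (- - mu) with mu in hM by ring.
      apply (Rmult_eq_reg_r (/ (2 * mu))); [| apply Rinv_neq_0_compat; lra].
      rewrite Rmult_0_l.
      replace 0 with ((exp 0 * ((0 - 1 + mu) / (2 * mu)) - exp (- mu) * ((- mu - 1 + mu) / (2 * mu)) +
        (- exp (- M) * ((M + 1 + mu) / (2 * mu)) - - 1 * ((0 + 1 + mu) / (2 * mu)))) - 1/2)
        by (rewrite exp_0; lra).
      rewrite exp_0. field. lra.
    + exfalso. rewrite (hbig ltac:(lra)) in hM.
      assert (exp (- M) < exp (- mu)) by (apply exp_increasing; lra). lra.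
  - intro h. destruct (Rlt_le_dec M mu) as [h'|h'].
    + exfalso. rewrite (G2 mu hmu M) in hM by lra.
      pose proof (G2 mu hmu mu ltac:(lra)) as hGm.
      pose proof (ineq_b mu M hmu ltac:(lra)).
      assert (A2 mu M < A2 mu mu).
      { unfold A2. replace (mu + 1 + mu) with (2 * mu + 1) by ring.
        apply (Rmult_lt_reg_r (2 * mu)); [lra|].
        replace (- exp (- M) * ((M + 1 + mu) / (2 * mu)) * (2 * mu)) with (- (exp (- M) * (M + 1 + mu))) by (field; lra).
        replace (- exp (- mu) * ((2 * mu + 1) / (2 * mu)) * (2 * mu)) with (- (exp (- mu) * (2 * mu + 1))) by (field; lra).
        lra. }
      lra.
    + rewrite (hbig h') in hM.
      assert (hx : exp (- M) = / 2) by lra.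
      rewrite exp_Ropp in hx.
      assert (exp M = 2). { rewrite <- (Rinv_inv (exp M)), hx. apply Rinv_inv. }
      rewrite <- H, ln_exp. reflexivity.
Qed.
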